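(* Let $p$ be an odd prime and let $L$ be a $\mathbb{Z}_p$-Lie lattice with soluble radical $R$. Then $R$ is isolated, i.e. $R=\mathrm{iso}_L(R)$. Moreover, if $L$ is saturable, then $R$ is PF-embedded in $L$.
   Context: A $\mathbb{Z}_p$-Lie lattice is a Lie algebra over $\mathbb{Z}_p$ free of finite rank as a module. Its soluble radical is its unique maximal soluble Lie ideal. For a Lie sublattice $M$ of $L$, $\mathrm{iso}_L(M)=L\cap(\mathbb{Q}_p\otimes M)$. For an ideal $M$ of $L$, a potent filtration of $M$ in $L$ is a descending series $(M_i)$ of ideals of $L$ with $M_1=M$, $\bigcap M_i=0$, $[M_i,L]\subseteq M_{i+1}$, $[M_i,L,\ldots,L]\subseteq pM_{i+1}$ ($p-1$ copies of $L$, left-normed); $M$ is PF-embedded if one exists; $L$ is saturable iff it admits a potent filtration of itself. *)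

(* Defs.v *)
From HB Require Import structures.
From mathcomp Require Import all_boot all_order all_algebra.
From mathcomp Require Import boolp.
Set Implicit Arguments. Unset Strict Implicit. Unset Printing Implicit Defensive.
Import Order.TTheory GRing.Theory Num.Theory.
Local Open Scope ring_scope.
Notation "m %%Z d" := (modz m d) (at level 40, left associativity).

(* The p-adic integers Z_p, built as the inverse limit of the Z/p^n Z:      *)
(* an element is a sequence x with x n in [0, p^n) and x (n+1) = x n mod p^n *)
(* (residues are represented by their canonical representative in int).     *)
(* As for 'F_p in MathComp, the base used is b := p.-2.+2 (= p for p >= 2),  *)
(* so that the construction is a genuine ring for every p.                  *)

Section PAdic.
Variable p : nat.
Definition zbase : nat := p.-2.+2.
Definition zmodn (n : nat) : int := (zbase ^ n)%N%:Z.

Record padic := PAdic {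
  pval : nat -> int;
  pvalP : forall n, (pval n.+1 %%Z zmodn n)%Z = pval n }.

Lemma padic_inj (x y : padic) : pval x = pval y -> x = y.
Proof.
case: x y => [f fP] [g gP] /= efg; subst g.
by rewrite (Prop_irrelevance fP gP).
Qed.

HB.instance Definition _ := gen_eqMixin padic.
HB.instance Definition _ := gen_choiceMixin padic.

Lemma modz_mulm (m : int) n :
  ((m %%Z zmodn n.+1) %%Z zmodn n = m %%Z zmodn n)%Z.
Proof.
have -> : zmodn n.+1 = zmodn n * (zbase%:Z).
  by rewrite /zmodn expnSr PoszM.
rewrite [in RHS](divz_eq m (zmodn n * zbase%:Z)).
by rewrite (mulrC (zmodn n)) mulrA modzMDl.
Qed.

Lemma reduce_ok (f : nat -> int) :
  (forall n, f n.+1 = f n %[mod zmodn n])%Z ->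
  forall n, ((f n.+1 %%Z zmodn n.+1) %%Z zmodn n)%Z = (f n %%Z zmodn n)%Z.
Proof. move=> H n; rewrite modz_mulm; exact: H. Qed.

Definition mkpadic (f : nat -> int)
  (H : (forall n, f n.+1 = f n %[mod zmodn n])%Z) : padic :=
  @PAdic (fun n => f n %%Z zmodn n)%Z (reduce_ok H).

Lemma pvalE x n : (pval x n %%Z zmodn n)%Z = pval x n.
Proof. by rewrite -(pvalP x n) modz_mod. Qed.

Lemma zero_ok n : (0 : int) = 0 %[mod zmodn n]%Z.
Proof. by []. Qed.
Definition pzero := mkpadic (f := fun _ => 0) zero_ok.

Lemma one_ok n : (1 : int) = 1 %[mod zmodn n]%Z.
Proof. by []. Qed.
Definition pone := mkpadic (f := fun _ => 1) one_ok.

Lemma add_ok (x y : padic) n :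
  (pval x n.+1 + pval y n.+1 = pval x n + pval y n %[mod zmodn n])%Z.
Proof. by rewrite -[LHS]modzDm !pvalP. Qed.
Definition padd x y := mkpadic (f := fun n => pval x n + pval y n) (add_ok x y).

Lemma opp_ok (x : padic) n :
  (- pval x n.+1 = - pval x n %[mod zmodn n])%Z.
Proof. by rewrite -[LHS]modzNm pvalP. Qed.
Definition popp x := mkpadic (f := fun n => - pval x n) (opp_ok x).

Lemma mul_ok (x y : padic) n :
  (pval x n.+1 * pval y n.+1 = pval x n * pval y n %[mod zmodn n])%Z.
Proof. by rewrite -[LHS]modzMml -[LHS]modzMmr !pvalP. Qed.
Definition pmul x y := mkpadic (f := fun n => pval x n * pval y n) (mul_ok x y).

Lemma peqP (x y : padic) : (forall n, pval x n = pval y n) -> x = y.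
Proof. by move=> H; apply: padic_inj; apply: funext. Qed.

Lemma paddA : associative padd.
Proof. by move=> x y z; apply: peqP => n /=; rewrite modzDml modzDmr addrA. Qed.
Lemma paddC : commutative padd.
Proof. by move=> x y; apply: peqP => n /=; rewrite addrC. Qed.
Lemma padd0 : left_id pzero padd.
Proof. by move=> x; apply: peqP => n /=; rewrite mod0z add0r pvalE. Qed.
Lemma paddN : left_inverse pzero popp padd.
Proof. by move=> x; apply: peqP => n /=; rewrite modzDml addNr. Qed.

HB.instance Definition _ := GRing.isZmodule.Build padic paddA paddC padd0 paddN.

Lemma pmulA : associative pmul.
Proof. by move=> x y z; apply: peqP => n /=; rewrite modzMml modzMmr mulrA. Qed.
Lemma pmulC : commutative pmul.
Proof. by move=> x y; apply: peqP => n /=; rewrite mulrC. Qed.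
Lemma pmul1 : left_id pone pmul.
Proof. by move=> x; apply: peqP => n /=; rewrite modzMml mul1r pvalE. Qed.
Lemma pmulDl : left_distributive pmul (@GRing.add padic).
Proof.
move=> x y z; apply: peqP => n /=.
by rewrite modzMml modzDm mulrDl.
Qed.
Lemma pone_neq0 : pone != (0 : padic).
Proof.
apply/eqP => /(congr1 (fun x => pval x 1)) /=.
by rewrite mod0z /zmodn expn1 modz_small.
Qed.

HB.instance Definition _ :=
  GRing.Zmodule_isComNzRing.Build padic pmulA pmulC pmul1 pmulDl pone_neq0.

End PAdic.

Section Lie.
Variable p : nat.
Variable L : lmodType (padic p).
Variable br : L -> L -> L.

Definition lie_bracket : Prop :=
  [/\ forall (a : (padic p)) x y z, br (a *: x + y) z = a *: br x z + br y z,
      forall (a : (padic p)) x y z, br z (a *: x + y) = a *: br z x + br z y,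
      forall x, br x x = 0 &
      forall x y z, br x (br y z) + br y (br z x) + br z (br x y) = 0].

Definition free_finite_rank : Prop :=
  exists (n : nat) (f : L -> 'rV[(padic p)]_n),
    (forall (a : (padic p)) x y, f (a *: x + y) = a *: f x + f y) /\ bijective f.

Definition subset (M N : L -> Prop) := forall x, M x -> N x.
Definition seteq (M N : L -> Prop) := forall x, M x <-> N x.

Definition submodule (M : L -> Prop) : Prop :=
  [/\ M 0, forall x y, M x -> M y -> M (x + y) &
      forall (a : (padic p)) x, M x -> M (a *: x)].

Definition span (S : L -> Prop) : L -> Prop :=
  fun x => forall N, submodule N -> subset S N -> N x.

Definition lie_ideal (M : L -> Prop) : Prop :=
  submodule M /\ forall x y, M x -> M (br x y).

Fixpoint derived (M : L -> Prop) (k : nat) : L -> Prop :=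
  match k with
  | 0 => M
  | k.+1 => span (fun z => exists x y,
                    [/\ derived M k x, derived M k y & z = br x y])
  end.

Definition soluble (M : L -> Prop) : Prop :=
  exists k, forall x, derived M k x -> x = 0.

Definition soluble_ideal (M : L -> Prop) : Prop := lie_ideal M /\ soluble M.

Definition maximal_soluble_ideal (M : L -> Prop) : Prop :=
  soluble_ideal M /\
  forall J, soluble_ideal J -> subset M J -> subset J M.

Definition soluble_radical (R : L -> Prop) : Prop :=
  maximal_soluble_ideal R /\
  forall J, maximal_soluble_ideal J -> seteq J R.

(* iso_L(M) = L ∩ (Q_p ⊗ M) = { x in L | p^k x in M for some k }. *)
Definition iso (M : L -> Prop) : L -> Prop :=
  fun x => exists k : nat, M ((p ^ k)%:R *: x).

Definition isolated (M : L -> Prop) : Prop := seteq M (iso M).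

Definition lnbr (x : L) (ys : seq L) : L := foldl br x ys.

Definition potent_filtration (Ms : nat -> L -> Prop) (N : L -> Prop) : Prop :=
  [/\ forall i, (0 < i)%N -> lie_ideal (Ms i),
      forall i, (0 < i)%N -> subset (Ms i.+1) (Ms i) &
      seteq (Ms 1%N) N] /\
  [/\
      forall x, (forall i, (0 < i)%N -> Ms i x) -> x = 0,
      forall i x y, (0 < i)%N -> Ms i x -> Ms i.+1 (br x y) &
      forall i x (ys : seq L), (0 < i)%N -> size ys = p.-1 -> Ms i x ->
        exists z, Ms i.+1 z /\ lnbr x ys = p%:R *: z].

Definition PF_embedded (N : L -> Prop) : Prop :=
  exists Ms, potent_filtration Ms N.

Definition saturable : Prop := PF_embedded (fun _ => True).

End Lie.

(* Main.v *)
Require Import Defs.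
From HB Require Import structures.
From mathcomp Require Import all_boot all_order all_algebra.
Set Implicit Arguments. Unset Strict Implicit. Unset Printing Implicit Defensive.
Import Order.TTheory GRing.Theory Num.Theory.
Local Open Scope ring_scope.

Lemma pval0 p m : pval (0 : padic p) m = 0.
Proof. by rewrite /= mod0z. Qed.

Lemma pvalD p (x y : padic p) m : pval (x + y) m = (pval x m + pval y m) %%Z zmodn p m.
Proof. by []. Qed.

Lemma pvalM p (x y : padic p) m : pval (x * y) m = (pval x m * pval y m) %%Z zmodn p m.
Proof. by []. Qed.

Lemma pval1 p m : pval (1 : padic p) m = 1 %%Z zmodn p m.
Proof. by []. Qed.

Lemma pval_nat p n m : pval (n%:R : padic p) m = (n%:Z) %%Z zmodn p m.
Proof.
elim: n => [|n IH]; first by rewrite mulr0n pval0 mod0z.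
by rewrite mulrS pvalD pval1 IH modzDm intS.
Qed.

Lemma modz_zmodn p m n k : ((m %%Z zmodn p (k + n)) %%Z zmodn p n)%Z = (m %%Z zmodn p n)%Z.
Proof.
elim: k m => [|k IH] m; first by rewrite add0n modz_mod.
by rewrite addSn -[in RHS]IH -[in RHS](modz_mulm p m (k + n)).
Qed.

Lemma pval_shift p (b : padic p) n k : ((pval b (k + n)) %%Z zmodn p n)%Z = pval b n.
Proof.
elim: k => [|k IH]; first by rewrite add0n pvalE.
by rewrite addSn -(modz_zmodn _ _ n k) pvalP IH.
Qed.

Lemma zmodnD p k n : zmodn p (k + n) = zmodn p k * zmodn p n.
Proof. by rewrite /zmodn expnD PoszM. Qed.

Lemma zmodn_gt0 p n : 0 < zmodn p n.
Proof. by rewrite /zmodn ltz_nat expn_gt0. Qed.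

Lemma padic_tf p k (b : padic p) : ((zbase p ^ k)%N%:R : padic p) * b = 0 -> b = 0.
Proof.
move=> H; apply: peqP => n; rewrite pval0.
have := congr1 (fun x => pval x (k + n)) H => /=.
rewrite pval_nat /= modzMml. idtac.
have -> : ((zbase p ^ k)%N%:Z) = zmodn p k by [].
rewrite zmodnD -mulz_modr ?zmodn_gt0 // => /eqP.
rewrite mod0z mulf_eq0 (gt_eqF (zmodn_gt0 _ _)) /= => /eqP.
by rewrite pval_shift.
Qed.
Section X.
End X.

Lemma br0l p (L : lmodType (padic p)) (br : L -> L -> L) :
  lie_bracket br -> forall z, br 0 z = 0.
Proof.
case=> H1 _ _ _ z; have := H1 1 0 0 z.
rewrite !scale1r addr0 => e.
by apply: (addrI (br 0 z)); rewrite addr0 -e.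
Qed.

Lemma br0r p (L : lmodType (padic p)) (br : L -> L -> L) :
  lie_bracket br -> forall z, br z 0 = 0.
Proof.
case=> _ H1 _ _ z; have := H1 1 0 0 z.
rewrite !scale1r addr0 => e.
by apply: (addrI (br z 0)); rewrite addr0 -e.
Qed.

Lemma brZl p (L : lmodType (padic p)) (br : L -> L -> L) :
  lie_bracket br -> forall a x z, br (a *: x) z = a *: br x z.
Proof.
move=> hL a x z; case: (hL) => H1 _ _ _.
by have := H1 a x 0 z; rewrite addr0 br0l // addr0.
Qed.

Lemma brZr p (L : lmodType (padic p)) (br : L -> L -> L) :
  lie_bracket br -> forall a x z, br z (a *: x) = a *: br z x.
Proof.
move=> hL a x z; case: (hL) => _ H1 _ _.
by have := H1 a x 0 z; rewrite addr0 br0r // addr0.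
Qed.

Lemma span_sub p (L : lmodType (padic p)) (S : L -> Prop) : submodule (Defs.span S).
Proof.
split.
- by move=> N [].
- by move=> x y hx hy N hN hS; case: (hN) => _ hD _; apply: hD; [apply: hx|apply: hy].
- by move=> a x hx N hN hS; case: (hN) => _ _ hZ; apply: hZ; apply: hx.
Qed.

Lemma sub_span p (L : lmodType (padic p)) (S : L -> Prop) : Defs.subset S (Defs.span S).
Proof. by move=> x hx N _ hS; apply: hS. Qed.

Lemma derived_sub p (L : lmodType (padic p)) (br : L -> L -> L) M k :
  submodule M -> submodule (derived br M k).
Proof. by case: k => [//|k] _; apply: span_sub. Qed.

Lemma scalePP p (L : lmodType (padic p)) a b (x : L) :
  ((p ^ a)%N%:R : padic p) *: (((p ^ b)%N%:R : padic p) *: x) = ((p ^ (a + b))%N%:R) *: x.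
Proof. by rewrite scalerA -natrM expnD. Qed.

Lemma subZP p (L : lmodType (padic p)) (N : L -> Prop) a b x :
  submodule N -> N (((p ^ a)%N%:R : padic p) *: x) -> N (((p ^ (b + a))%N%:R : padic p) *: x).
Proof. by case=> _ _ hZ h; rewrite -scalePP; apply: hZ. Qed.

Lemma iso_sub p (L : lmodType (padic p)) (N : L -> Prop) :
  submodule N -> submodule (iso N).
Proof.
move=> hN; case: (hN) => h0 hD hZ; split.
- by exists 0%N; rewrite scaler0.
- move=> x y [a ha] [b hb]; exists (b + a)%N; rewrite scalerDr.
  apply: hD; first exact: subZP.
  by rewrite addnC; apply: subZP.
- move=> c x [a ha]; exists a; rewrite scalerA mulrC -scalerA; exact: hZ.
Qed.

Lemma sub_iso p (L : lmodType (padic p)) (N : L -> Prop) : Defs.subset N (iso N).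
Proof. by move=> x hx; exists 0%N; rewrite expn0 scale1r. Qed.

Lemma iso_ideal p (L : lmodType (padic p)) (br : L -> L -> L) (N : L -> Prop) :
  lie_bracket br -> lie_ideal br N -> lie_ideal br (iso N).
Proof.
move=> hL [hN hI]; split; first exact: iso_sub.
move=> x y [a ha]; exists a; rewrite -brZl //; exact: hI.
Qed.

Lemma derived_iso p (L : lmodType (padic p)) (br : L -> L -> L) (N : L -> Prop) :
  lie_bracket br -> submodule N -> forall j x, derived br (iso N) j x ->
  exists k, derived br N j (((p ^ k)%N%:R : padic p) *: x).
Proof.
move=> hL hN; elim=> [|j IH] x //=.
move=> hx; apply: (hx (iso (derived br N j.+1))); last first.
  move=> z [x' [y' [hx' hy' ->]]].
  have [a ha] := IH _ hx'; have [b hb] := IH _ hy'.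
  exists (a + b)%N; rewrite -scalePP -brZr // -brZl //.
  by apply: sub_span; exists (((p ^ a)%N%:R : padic p) *: x'), (((p ^ b)%N%:R : padic p) *: y').
apply: iso_sub; exact: span_sub.
Qed.

Lemma tf p (L : lmodType (padic p)) : zbase p = p -> free_finite_rank L ->
  forall k (x : L), ((p ^ k)%N%:R : padic p) *: x = 0 -> x = 0.
Proof.
move=> hz [n [f [hf [g fg gf]]]] k x hx.
have f0 : f 0 = 0.
  have := hf 1 0 0; rewrite !scale1r addr0 => e.
  by apply: (addrI (f 0)); rewrite addr0 -e.
have fx : f x = 0.
  have := hf ((p ^ k)%N%:R) x 0; rewrite addr0 hx f0 addr0 => /esym e.
  apply/rowP => i; rewrite mxE; apply: (@padic_tf p k).
  by rewrite hz; have := congr1 (fun v : 'M_(1, n) => v 0 i) e; rewrite !mxE.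
by rewrite -(fg x) fx -f0 fg.
Qed.

Lemma lnbr_in p (L : lmodType (padic p)) (br : L -> L -> L) (N : L -> Prop) :
  lie_ideal br N -> forall ys x, N x -> N (lnbr br x ys).
Proof.
move=> [_ hI]; elim=> [|y ys IH] x hx //=.
by apply: IH; apply: hI.
Qed.

Theorem mainTheorem12 (p : nat) (pP : prime p) (p_odd : odd p)
  (L : lmodType (padic p)) (br : L -> L -> L)
  (hLie : lie_bracket br) (hfree : free_finite_rank L)
  (R : L -> Prop) (hR : soluble_radical br R) :
  isolated R /\ (saturable br -> PF_embedded br R).
Proof.
have hz : zbase p = p.
  by rewrite /zbase; have := prime_gt1 pP; case: (p) => [|[|q]].
case: hR => [[[hRi [m hm]] hmax] _].
have hRs : submodule R by case: hRi.
have hiso : isolated R.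
  have sol : soluble_ideal br (iso R).
    split; first exact: iso_ideal.
    exists m => x hx.
    have [k hk] := derived_iso hLie hRs hx.
    apply: (tf hz hfree (k := k)); exact: hm.
  have sub := hmax _ sol (@sub_iso _ _ R).
  by move=> x; split; [apply: sub_iso | apply: sub].
split=> // [[Ms [[hI hD h1] [h0 hbr hpot]]]].
exists (fun i x => Ms i x /\ R x); split; split.
- move=> i hi; have [[s0 sD sZ] sI] := hI i hi; case: hRi => [[r0 rD rZ] rI].
  split; first split.
  + by split.
  + by move=> x y [? ?] [? ?]; split; [apply: sD|apply: rD].
  + by move=> a x [? ?]; split; [apply: sZ|apply: rZ].
  + by move=> x y [? ?]; split; [apply: sI|apply: rI].
- by move=> i hi x [? ?]; split => //; apply: hD.
- by move=> x; split; [case|move=> ?; split => //; apply/h1].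
- by move=> x hx; apply: h0 => i hi; case: (hx i hi).
- move=> i x y hi [? ?]; split; first exact: hbr.
  by case: hRi => _ rI; apply: rI.
- move=> i x ys hi hs [hx hRx].
  have [z [hz1 hz2]] := hpot i x ys hi hs hx.
  exists z; split => //; split => //.
  apply/hiso; exists 1%N; rewrite expn1 -hz2.
  exact: lnbr_in.
Qed.
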